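(* Let $X$ be an infinite h-homogeneous zero-dimensional compact Hausdorff space, let $\alpha=(A_1,\dots,A_n)$ be an ordered partition of $X$ into nonempty clopen sets, and let $\upsilon\in\Phi(X)$. Then $\upsilon\in\mathfrak U_\alpha$ if and only if the induced order $<_\upsilon$ on $\{A_1,\dots,A_n\}$ satisfies $A_i<_\upsilon A_j\iff i<j$. In particular $\upsilon\in\mathfrak U_{t^*_\upsilon(\alpha)}$.
   Context: h-homogeneous: every nonempty clopen subset of $X$ is homeomorphic to $X$. $\mathrm{Exp}(X)$ is the space of nonempty closed subsets of $X$ with the Vietoris topology; $\Phi(X)\subset\mathrm{Exp}(\mathrm{Exp}(X))$ is the space of maximal chains (maximal families in $\mathrm{Exp}(X)$ totally ordered by inclusion). For open sets $U_1,\dots,U_k$ of a space $Y$, $\langle U_1,\dots,U_k\rangle=\{F\in\mathrm{Exp}(Y): F\cap U_i\ne\emptyset\ \forall i,\ F\subset\bigcup_i U_i\}$. For $\alpha=(A_1,\dots,A_n)$ set $\mathcal U_j=\langle A_1,\dots,A_j\rangle\subset \mathrm{Exp}(X)$ and $\mathfrak U_\alpha=\langle\mathcal U_1,\dots,\mathcal U_n\rangle\subset\mathrm{Exp}(\mathrm{Exp}(X))$. For $\upsilon\in\Phi(X)$ and nonempty closed $D$, $D_\upsilon=\bigcap\{A\in\upsilon:A\cap D\ne\emptyset\}$; the induced order is $A_i<_\upsilon A_j$ iff $(A_i)_\upsilon\subseteq(A_j)_\upsilon$, and $t^*_\upsilon(\alpha)$ is the ordered partition listing $A_1,\dots,A_n$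 in increasing $<_\upsilon$-order. *)

(* Defs.v *)
From mathcomp Require Import all_boot all_order.
From mathcomp Require Import all_classical all_reals all_analysis.
Set Implicit Arguments. Unset Strict Implicit. Unset Printing Implicit Defensive.
Local Open Scope classical_set_scope.

Definition zero_dim_base (X : topologicalType) : Prop :=
  forall (U : set X) (x : X), open U -> U x ->
    exists V : set X, [/\ clopen V, V x & V `<=` U].

(* the subspace A (with the topology induced from X) is homeomorphic to X:
   f : A -> X continuous (for the subspace topology), g : X -> A continuous,
   mutually inverse *)
Definition homeomorphic_to_whole (X : topologicalType) (A : set X) : Prop :=
  exists f g : X -> X,
    [/\ {within A, continuous f}, continuous g, (forall y, A (g y)),
        (forall x, A x -> g (f x) = x) & (forall y, f (g y) = y)].

Definition h_homogeneous (X : topologicalType) : Prop :=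
  forall A : set X, clopen A -> A !=set0 -> homeomorphic_to_whole A.

Definition Exp (X : topologicalType) : set (set X) :=
  [set F | closed F /\ F !=set0].

Definition is_chain (X : topologicalType) (c : set (set X)) : Prop :=
  c `<=` @Exp X /\ (forall F G, c F -> c G -> F `<=` G \/ G `<=` F).

Definition Phi (X : topologicalType) : set (set (set X)) :=
  [set u | is_chain u /\ (forall c, is_chain c -> u `<=` c -> c = u)].

(* ordered partition (A_1,...,A_n) of X into nonempty clopen sets,
   indexed by 'I_n (A_{k+1} is A k) *)
Definition ordered_clopen_partition (X : topologicalType) (n : nat)
  (A : 'I_n -> set X) : Prop :=
  [/\ (forall i, clopen (A i) /\ A i !=set0),
      (forall i j, i != j -> A i `&` A j = set0) &
      (forall x, exists i, A i x)].

(* U_j = < A_1, ..., A_j > in Exp(X)  (j : 'I_n is the (j+1)-th index) *)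
Definition Ucal (X : topologicalType) (n : nat) (A : 'I_n -> set X) (j : 'I_n)
  : set (set X) :=
  [set F | @Exp X F /\
     (forall i : 'I_n, (i <= j)%N -> F `&` A i !=set0) /\
     (forall x, F x -> exists i : 'I_n, (i <= j)%N /\ A i x)].

(* membership of a family u (already an element of Exp(@Exp X)) in
   Ufrak_alpha = < U_1, ..., U_n > *)
Definition in_Ufrak (X : topologicalType) (n : nat) (A : 'I_n -> set X)
  (u : set (set X)) : Prop :=
  (forall j : 'I_n, u `&` Ucal A j !=set0) /\
  (forall F, u F -> exists j : 'I_n, Ucal A j F).

Definition Dsub (X : topologicalType) (u : set (set X)) (D : set X) : set X :=
  [set x | forall B, u B -> B `&` D !=set0 -> B x].

Definition induced_le (X : topologicalType) (u : set (set X)) (D E : set X)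
  : Prop := Dsub u D `<=` Dsub u E.

(* Main.v *)
Require Import Defs.
From mathcomp Require Import all_boot all_order.
From mathcomp Require Import all_classical all_reals all_analysis.
Set Implicit Arguments.
Local Open Scope classical_set_scope.

Section S.
Context (X : topologicalType).
Implicit Types (u : set (set X)) (D E G : set X).

Lemma closed_of_closure D : closed D -> closure D `<=` D.
Proof. by move=> /closure_id {2}->. Qed.

Lemma Dsub_closed u D : is_chain u -> closed (Dsub u D).
Proof.
move=> [uE _].
have -> : Dsub u D = \bigcap_(B in [set B | u B /\ B `&` D !=set0]) B.
  by apply/seteqP; split => x H B; [case=> ?? ; apply: H|move=> ??; apply: H].
by apply: closed_bigI => B [/uE []].
Qed.

Lemma Dsub_cmp u D E : is_chain u -> Dsub u D `<=` Dsub u E \/ Dsub u E `<=` Dsub u D.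
Proof.
move=> [_ ch].
case: (pselect (Dsub u D `<=` Dsub u E)) => h; first by left.
right => y yE.
have [x /not_implyP[xD /existsNP[B2 /not_implyP[uB2 /not_implyP[m2 nB2]]]]] :=
  (existsNP _).2 h.
case: (pselect (Dsub u D y)) => // /existsNP[B1 /not_implyP[uB1 /not_implyP[m1 nB1]]].
exfalso; case: (ch _ _ uB1 uB2) => s.
  by apply: nB2; apply: s; apply: xD.
by apply: nB1; apply: s; apply: yE.
Qed.

Lemma Dsub_below u D G : is_chain u -> u G -> ~ (G `&` D !=set0) -> G `<=` Dsub u D.
Proof.
move=> [_ ch] uG nm x Gx B uB mB.
case: (ch _ _ uG uB) => s; first exact: s.
by exfalso; apply: nm; case: mB => y [By Dy]; exists y; split => //; apply: s.
Qed.

Lemma Dsub_above u D G : u G -> G `&` D !=set0 -> Dsub u D `<=` G.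
Proof. by move=> uG mG x H; apply: H. Qed.

Lemma Dsub_meet u D : is_chain u -> compact [set: X] -> closed D -> D !=set0 ->
  Dsub u D `&` D !=set0.
Proof.
move=> [uE ch] cpt cD [x0 Dx0].
case: (pselect (exists B, u B /\ B `&` D !=set0)) => [[B0 [uB0 B0D]]|nB]; last first.
  exists x0; split => // B uB mB; exfalso; apply: nB; by exists B.
pose S := [set B | u B /\ B `&` D !=set0].
have FF : Filter (filter_from S (fun B => B `&` D)).
  apply: filter_from_filter; first by exists B0.
  move=> B1 B2 [u1 m1] [u2 m2]; case: (ch _ _ u1 u2) => h.
    by exists B1 => // x [b1 dx]; split; split => //; apply: h.
  by exists B2 => // x [b2 dx]; split; split => //; apply: h.
have PF : ProperFilter (filter_from S (fun B => B `&` D)).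
  by apply: filter_from_proper => // B [].
have [|p [_ clp]] := cpt _ PF; first by exists B0.
rewrite clusterE in clp.
have clpB : forall B, S B -> closure (B `&` D) p.
  by move=> B SB; apply: clp; exists B.
exists p; split.
  move=> B uB mB; have := clpB B (conj uB mB).
  move/(closureS (@subIsetl _ B D)); apply: closed_of_closure.
  by case: (uE _ uB).
have := clpB B0 (conj uB0 B0D).
by move/(closureS (@subIsetr _ B0 D)); apply: closed_of_closure.
Qed.


Lemma Phi_insert u G : Phi u -> closed G -> G !=set0 ->
  (forall B, u B -> B `<=` G \/ G `<=` B) -> u G.
Proof.
move=> [[uE ch] mx] cG nG cmp.
have c : is_chain (u `|` [set G]).
  split.
    by move=> B [/uE //|->]; split.
  move=> F1 F2 [u1|->] [u2|->].
  - exact: ch.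
  - exact: cmp.
  - by case: (cmp _ u2) => h; [right|left].
  - by left.
have := mx _ c (@subsetUl _ u [set G]).
by move=> e; rewrite -e; right.
Qed.

Lemma Dsub_in u D : Phi u -> compact [set: X] -> closed D -> D !=set0 ->
  u (Dsub u D).
Proof.
move=> Pu cpt cD nD; have ch := Pu.1.
apply: Phi_insert => //.
- exact: Dsub_closed.
- by have [x [? _]] := Dsub_meet ch cpt cD nD; exists x.
move=> B uB; case: (pselect (B `&` D !=set0)) => m.
  by right; apply: Dsub_above.
by left; apply: Dsub_below.
Qed.

Lemma Dsub_distinct u D E : Phi u -> hausdorff_space X -> compact [set: X] ->
  clopen D -> D !=set0 -> clopen E -> E !=set0 -> D `&` E = set0 ->
  Dsub u D = Dsub u E -> False.
Proof.
move=> Pu hX cpt [oD cD] nD [oE cE] nE dDE eq.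
have ch := Pu.1.
have [p [Cp Dp]] := Dsub_meet ch cpt cD nD.
have [q [Cq Eq]] := Dsub_meet ch cpt cE nE.
rewrite -eq in Cq.
pose G := (Dsub u D `&` ~` D `&` ~` E) `|` [set p].
have cG : closed G.
  apply: closedU; last exact: accessible_closed_set1 (hausdorff_accessible hX) p.
  apply: closedI; [apply: closedI; first exact: Dsub_closed|].
    by rewrite closedC.
  by rewrite closedC.
have uG : u G.
  apply: Phi_insert => //; first by exists p; right.
  move=> B uB.
  case: (pselect (B `&` D !=set0)) => mD.
    right => x [[[Cx _] _]|->]; [exact: Dsub_above Cx|exact: Dsub_above Cp].
  case: (pselect (B `&` E !=set0)) => mE.
    right => x [[[Cx _] _]|->].
      by apply: (Dsub_above uB mE); rewrite -eq.
    by apply: (Dsub_above uB mE); rewrite -eq.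
  left => x Bx; left; split; [split|].
  - exact: Dsub_below uB mD x Bx.
  - by move=> Dx; apply: mD; exists x.
  - by move=> Ex; apply: mE; exists x.
have mG : G `&` D !=set0 by exists p; split => //; right.
have := Dsub_above uG mG Cq; case => [[[_ _] nEq]|qp]; first exact: nEq.
have : (D `&` E) p by split => //; rewrite -qp.
by rewrite dDE.
Qed.


Section Part.
Context (n : nat) (A : 'I_n -> set X) (u : set (set X)).
Hypotheses (Pu : Phi u) (hX : hausdorff_space X) (cpt : compact [set: X])
  (hA : ordered_clopen_partition A).

Let ch := Pu.1.
Let hcl : forall i, clopen (A i) /\ A i !=set0. Proof. by case: hA. Qed.
Let hdis : forall i j : 'I_n, i != j -> A i `&` A j = set0. Proof. by case: hA. Qed.
Let hcov : forall x, exists i, A i x. Proof. by case: hA. Qed.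
Let cA i : closed (A i). Proof. by case: (hcl i) => [[]]. Qed.
Let nA i : A i !=set0. Proof. by case: (hcl i). Qed.
Arguments cA : clear implicits.
Arguments nA : clear implicits.

Lemma same_index i j x : A i x -> A j x -> i = j.
Proof.
move=> Ai Aj; case: (eqVneq i j) => // /hdis e.
by have : (A i `&` A j) x by []; rewrite e.
Qed.

Lemma le_distinct i j : i != j -> induced_le u (A i) (A j) ->
  induced_le u (A j) (A i) -> False.
Proof.
move=> nij l1 l2.
have := @Dsub_distinct u (A i) (A j) Pu hX cpt (hcl i).1 (nA i) (hcl j).1 (nA j) (hdis i j nij).
by apply; apply/seteqP; split.
Qed.

Lemma part_fwd : in_Ufrak A u ->
  forall i j : 'I_n, i != j -> (induced_le u (A i) (A j) <-> (i < j)%N).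
Proof.
move=> [_ Hin].
have lt_le : forall i j : 'I_n, (i < j)%N -> induced_le u (A i) (A j).
  move=> i j lij.
  have uF := Dsub_in Pu cpt (cA j) (nA j).
  have [k [_ [meet out]]] := Hin _ uF.
  have [x [Fx Ajx]] := Dsub_meet ch cpt (cA j) (nA j).
  have [i' [i'k Ai'x]] := out x Fx.
  have ej := same_index Ai'x Ajx; subst i'.
  apply: (Dsub_above uF); apply: meet.
  by apply: leq_trans i'k; apply: ltnW.
move=> i j nij; split => [l|]; last exact: lt_le.
case: (ltngtP i j) => // [lji|eij].
  by exfalso; apply: (le_distinct nij l); apply: lt_le.
by exfalso; move: nij; rewrite (val_inj eij) eqxx.
Qed.

Lemma part_bwd :
  (forall i j : 'I_n, i != j -> (induced_le u (A i) (A j) <-> (i < j)%N)) ->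
  in_Ufrak A u.
Proof.
move=> H; split.
  move=> j; have uF := Dsub_in Pu cpt (cA j) (nA j).
  have [y [Fy Ajy]] := Dsub_meet ch cpt (cA j) (nA j).
  exists (Dsub u (A j)); split => //; split.
    by split; [exact: Dsub_closed | exists y].
  split.
    move=> i lij; case: (eqVneq i j) => [->|nij]; first by exists y.
    have lt : (i < j)%N by rewrite ltn_neqAle lij andbT; apply: contra nij => /eqP e; apply/eqP/val_inj.
    have [z [Cz Aiz]] := Dsub_meet ch cpt (cA i) (nA i).
    by exists z; split => //; apply: (H i j nij).2.
  move=> x Fx; have [k Akx] := hcov x; exists k; split => //.
  case: (leqP k j) => // ljk; exfalso.
  have nkj : k != j by rewrite neq_ltn ljk orbT.
  have : (k < j)%N.
    apply: (H k j nkj).1; apply: (Dsub_above uF).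
    by exists x.
  by rewrite ltnNge (ltnW ljk).
move=> F uF; have [cF [x0 Fx0]] := ch.1 _ uF.
have [k0 Ak0] := hcov x0.
have Pk0 : `[< F `&` A k0 !=set0 >] by apply/asboolP; exists x0.
case: (@arg_maxnP _ k0 (fun i => `[< F `&` A i !=set0 >]) (fun i => nat_of_ord i) Pk0)
  => j /asboolP Pj maxj.
exists j; split; first by split => //; exists x0.
split.
  move=> i lij; case: (eqVneq i j) => [->//|nij].
  have lt : (i < j)%N by rewrite ltn_neqAle lij andbT; apply: contra nij => /eqP e; apply/eqP/val_inj.
  apply: contrapT => nm.
  have s1 := Dsub_below ch uF nm.
  have s2 := Dsub_above uF Pj.
  have nji : j != i by rewrite eq_sym.
  have : (j < i)%N by apply: (H j i nji).1 => z /s2 /s1.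
  by rewrite ltnNge (ltnW lt).
move=> x Fx; have [k Akx] := hcov x; exists k; split => //.
by apply: maxj; apply/asboolP; exists x.
Qed.

Definition strictC (i j : 'I_n) : Prop :=
  Dsub u (A i) `<=` Dsub u (A j) /\ Dsub u (A i) <> Dsub u (A j).

Definition Sset (i : 'I_n) : {set 'I_n} := [set k | `[< strictC k i >]].

Lemma strict_card i j : strictC i j -> (#|Sset i| < #|Sset j|)%N.
Proof.
move=> [sij nij]; apply: proper_card; apply/fintype.properP; split.
  apply/fintype.subsetP => k; rewrite !finset.inE => /asboolP [ski nki]; apply/asboolP; split.
    by move=> x /ski /sij.
  move=> e; apply: nij; apply/seteqP; split => // x; rewrite -e; exact: ski.
exists i; rewrite !finset.inE; first by apply/asboolP.
by apply/negP => /asboolP [].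
Qed.

Lemma Sset_lt i : (#|Sset i| < n)%N.
Proof.
have : Sset i \subset finset.setC (finset.set1 i).
  by apply/fintype.subsetP => k; rewrite !finset.inE => /asboolP [_ nk]; apply/eqP => e; apply: nk; rewrite e.
move/subset_leq_card; rewrite cardsC1 card_ord.
move=> h; apply: (leq_ltn_trans h); rewrite ltn_predL; exact: leq_ltn_trans (leq0n i) (ltn_ord i).
Qed.

Definition rk (i : 'I_n) : 'I_n := Ordinal (Sset_lt i).

Lemma strict_or i j : i != j -> strictC i j \/ strictC j i.
Proof.
move=> nij; have ne : Dsub u (A i) <> Dsub u (A j).
  by move=> e; apply: (le_distinct nij); rewrite /induced_le e.
case: (Dsub_cmp (A i) (A j) ch) => h; [left|right]; split => //.
by move=> e; apply: ne.
Qed.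

Lemma rk_inj : injective rk.
Proof.
move=> i j e; apply/eqP; apply: contraT => nij.
have E : #|Sset i| = #|Sset j| by exact: (congr1 val e).
by case: (strict_or i j nij) => /strict_card; rewrite E ltnn.
Qed.

Lemma exists_sort : exists s : 'I_n -> 'I_n, bijective s /\
      (forall i j : 'I_n, (i < j)%N -> induced_le u (A (s i)) (A (s j))).
Proof.
exists (invF rk_inj); split.
  by exists rk; [exact: f_invF|exact: invF_f].
move=> i j lij; apply: contrapT => nl.
have h : strictC (invF rk_inj j) (invF rk_inj i).
  case: (Dsub_cmp (A (invF rk_inj i)) (A (invF rk_inj j)) ch) => // h.
  split => // e; apply: nl; rewrite /induced_le e; exact: subset_refl.
have := strict_card h.
have ->: #|Sset (invF rk_inj j)| = j by have := congr1 val (f_invF rk_inj j).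
have ->: #|Sset (invF rk_inj i)| = i by have := congr1 val (f_invF rk_inj i).
by rewrite ltnNge (ltnW lij).
Qed.

End Part.
End S.
Unset Implicit Arguments.

Theorem lemma3p4 (X : topologicalType) (n : nat) (A : 'I_n -> set X)
  (u : set (set X)) :
  hausdorff_space X -> compact [set: X] -> @zero_dim_base X ->
  infinite_set [set: X] -> @h_homogeneous X ->
  ordered_clopen_partition A -> @Phi X u ->
  (in_Ufrak A u <->
     (forall i j : 'I_n, i != j -> (induced_le u (A i) (A j) <-> (i < j)%N)))
  /\
  ((exists s : 'I_n -> 'I_n, bijective s /\
      (forall i j : 'I_n, (i < j)%N -> induced_le u (A (s i)) (A (s j)))) /\
   (forall s : 'I_n -> 'I_n, bijective s ->
      (forall i j : 'I_n, (i < j)%N -> induced_le u (A (s i)) (A (s j))) ->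
      in_Ufrak (fun k => A (s k)) u)).
Proof.
move=> hX cpt _ _ _ hA Pu.
split.
  split; [exact: (part_fwd Pu hX cpt hA) | exact: (part_bwd Pu cpt hA)].
split; first exact: (exists_sort Pu hX cpt hA).
move=> s [g sg gs] sorted.
have sinj : forall i j, i != j -> s i != s j.
  move=> i j nij; apply: contra nij => /eqP e; apply/eqP.
  by rewrite -(sg i) -(sg j) e.
have hAs : ordered_clopen_partition (fun k => A (s k)).
  case: hA => hcl hdis hcov; split.
  - by move=> i; exact: hcl.
  - by move=> i j nij; apply: hdis; apply: sinj.
  - by move=> x; have [k Ak] := hcov x; exists (g k); rewrite gs.
apply: (part_bwd Pu cpt hAs).
move=> i j nij; split => [l|]; last exact: sorted.
case: (ltngtP i j) => // [lji|eij].
  exfalso; apply: (le_distinct Pu hX cpt hA _ _ (sinj _ _ nij) l).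
  exact: sorted.
by exfalso; move: nij; rewrite (val_inj eij) eqxx.
Qed.
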